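(* Let $X_1,\dots,X_n$ be statistically compact topological spaces. Then the product space $\prod_{i=1}^n X_i$ is statistically compact.
   Context: For $A\subseteq\mathbb{N}$ let $d_n(A)=|A\cap\{1,\dots,n\}|/n$, $\overline{d}(A)=\limsup_n d_n(A)$, $\underline{d}(A)=\liminf_n d_n(A)$, and $d(A)$ their common value when equal. A sequence in $X$ is a map from an infinite subset $M\subseteq\mathbb{N}$ into $X$, written $(x_n)_{n\in M}$; a subsequence is $(x_n)_{n\in N}$ with $N\subseteq M$ infinite. It is nonthin if $\overline{d}(M)>0$. A nonthin sequence $(x_n)_{n\in M}$ is statistically convergent to $a\in X$ if for every open $U\ni a$, $d(\{n\in M:x_n\notin U\})=0$. A topological space is statistically compact if every nonthin sequence in it has a nonthin subsequence that is statistically convergent to some point of the space. *)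

(* Defs.v *)
From HB Require Import structures.
From mathcomp Require Import all_boot all_order all_algebra.
From mathcomp Require Import all_classical all_reals all_analysis.
From mathcomp Require Import Rstruct Rstruct_topology.
From Stdlib Require Import Rdefinitions.
Set Implicit Arguments. Unset Strict Implicit. Unset Printing Implicit Defensive.
Import Order.TTheory GRing.Theory Num.Theory.
Local Open Scope classical_set_scope.
Local Open Scope ring_scope.

(* d_n(A) = |A ∩ {1,...,n}| / n  (the value at n = 0 is 0 and irrelevant) *)
Definition dens_n (A : set nat) (n : nat) : R :=
  (\sum_(1 <= k < n.+1) ((k \in A : bool)%:R : R)) / n%:R.

Definition upper_density (A : set nat) : R := limn_sup (dens_n A).
Definition lower_density (A : set nat) : R := limn_inf (dens_n A).

Definition has_density (A : set nat) (a : R) : Prop :=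
  upper_density A = a /\ lower_density A = a.

(* A sequence (x_n)_{n in M} is given by an infinite index set M and a map
   x : nat -> X, of which only the values on M matter. *)
Definition nonthin (M : set nat) : Prop :=
  infinite_set M /\ 0 < upper_density M.

Definition stat_converges {X : topologicalType} (M : set nat) (x : nat -> X)
    (a : X) : Prop :=
  nonthin M /\
  forall U : set X, open U -> U a ->
    has_density [set n | M n /\ ~ U (x n)] 0.

Definition stat_compact (X : topologicalType) : Prop :=
  forall (M : set nat) (x : nat -> X), nonthin M ->
    exists N : set nat, N `<=` M /\ nonthin N /\
      exists a : X, stat_converges N x a.

(* Main.v *)
Require Import Defs.
From HB Require Import structures.
From mathcomp Require Import all_boot all_order all_algebra.
From mathcomp Require Import all_classical all_reals all_analysis.
From mathcomp Require Import Rstruct Rstruct_topology.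
From Stdlib Require Import Rdefinitions.
Set Implicit Arguments. Unset Strict Implicit. Unset Printing Implicit Defensive.
Import Order.TTheory GRing.Theory Num.Theory.
Local Open Scope classical_set_scope.
Local Open Scope ring_scope.
Bind Scope ring_scope with R.

Lemma ind_le (A B : set nat) k : (A `<=` B)%classic ->
  ((k \in A : bool)%:R : R) <= (k \in B : bool)%:R.
Proof.
move=> sAB; case: (boolP (k \in A)) => kA; last by rewrite ler0n.
have : k \in B by move: kA; rewrite !in_setE; apply: sAB.
by move=> ->.
Qed.

Lemma ind_U (A B : set nat) k :
  ((k \in (A `|` B)%classic : bool)%:R : R) <= (k \in A : bool)%:R + (k \in B : bool)%:R.
Proof.
case: (boolP (k \in (A `|` B)%classic)) => kAB; last by rewrite addr_ge0 // ler0n.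
move: kAB; rewrite in_setE => -[kA|kB].
  have kA' : k \in A by rewrite in_setE.
  by rewrite kA' lerDl ler0n.
have kB' : k \in B by rewrite in_setE.
by rewrite kB' lerDr ler0n.
Qed.

Lemma densE A n : dens_n A n =
  (\sum_(1 <= k < n.+1) ((k \in A : bool)%:R : R)) / n%:R.
Proof. by []. Qed.

Lemma dens_ge0 A n : 0 <= dens_n A n.
Proof. by rewrite densE divr_ge0 // ?sumr_ge0 // => i _; rewrite ler0n. Qed.

Lemma dens_le1 A n : dens_n A n <= 1.
Proof.
rewrite !densE; case: n => [|n]; first by rewrite big_geq // mul0r ler01.
rewrite ler_pdivrMr ?ltr0n // mul1r.
apply: (@le_trans _ _ (\sum_(1 <= k < n.+2) (1:R))).
  by apply: ler_sum => i _; case: (i \in A).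
by rewrite sumr_const_nat subn1 /=.
Qed.

Lemma dens_mono (A B : set nat) n : (A `<=` B)%classic -> dens_n A n <= dens_n B n.
Proof.
move=> sAB; rewrite !densE ler_wpM2r // ?invr_ge0 ?ler0n //.
by apply: ler_sum => i _; apply: ind_le.
Qed.

Lemma dens_U (A B : set nat) n : dens_n ((A `|` B)%classic) n <= dens_n A n + dens_n B n.
Proof.
rewrite !densE -mulrDl ler_wpM2r // ?invr_ge0 ?ler0n //.
by rewrite -big_split /=; apply: ler_sum => i _; apply: ind_U.
Qed.

Definition dz (A : set nat) := dens_n A @ \oo --> (0:R).

Lemma dz_sub (A B : set nat) : (B `<=` A)%classic -> dz A -> dz B.
Proof.
move=> sBA hA; apply: (@squeeze_cvgr _ _ _ _ (fun=> 0) (dens_n A)) => //.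
  by apply: nearW => n; rewrite dens_ge0 dens_mono.
exact: cvg_cst.
Qed.

Lemma dz_U (A B : set nat) : dz A -> dz B -> dz ((A `|` B)%classic).
Proof.
move=> hA hB; apply: (@squeeze_cvgr _ _ _ _ (fun=> 0) (dens_n A \+ dens_n B)).
- by apply: nearW => n; rewrite dens_ge0 dens_U.
- exact: cvg_cst.
- by have := @cvgD _ R^o _ _ _ _ _ _ _ hA hB; rewrite addr0; apply; typeclasses eauto.
Qed.

Lemma dz_hd (A : set nat) : dz A -> has_density A 0.
Proof. by move=> h; have [h1 h2] := cvg_limn_inf_sup h; split. Qed.

Lemma hd_dz (A : set nat) : has_density A 0 -> dz A.
Proof.
move=> [hs _].
have ub : has_ubound (range (dens_n A)).
  by exists 1 => _ [n _ <-]; apply: dens_le1.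
have lb : has_lbound (range (dens_n A)).
  by exists 0 => _ [n _ <-]; apply: dens_ge0.
have h := cvg_sups_inf ub lb.
have e : limn_sup (dens_n A) = inf (range (sups (dens_n A))) by apply: cvg_lim.
move: hs; rewrite /upper_density e => e0; rewrite e0 in h.
apply: (@squeeze_cvgr _ _ _ _ (fun=> 0) (sups (dens_n A))) => //; last exact: cvg_cst.
apply: nearW => n; rewrite dens_ge0 /=.
apply: ub_le_sup; last by exists n => /=.
exact: has_ubound_sdrop.
Qed.

Lemma dz0 : dz set0.
Proof.
have e : dens_n set0 = fun=> 0.
  apply: funext => n; rewrite densE big1 ?mul0r // => i _.
  by have -> : (i \in (set0 : set nat)) = false by apply/negbTE/negP; rewrite in_setE.
rewrite /dz e; exact: cvg_cst.
Qed.

Definition sfilt (N : set nat) : set_system nat :=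
  [set S | dz [set n | N n /\ ~ S n]].

Lemma sfilt_filter N : Filter (sfilt N).
Proof.
constructor.
- by apply: dz_sub dz0 => n [_ /(_ I)].
- move=> P Q hP hQ; apply: dz_sub (dz_U hP hQ) => n [Nn nPQ] /=.
  have [Pn|nP] := pselect (P n); last by left.
  have [Qn|nQ] := pselect (Q n); last by right.
  by exfalso; apply: nPQ.
- move=> P Q sPQ hP; apply: dz_sub hP => n [Nn nQ]; split => // Pn; exact/nQ/sPQ.
Qed.
Existing Instance sfilt_filter.

Lemma sc_cvg {X : topologicalType} N (y : nat -> X) b :
  stat_converges N y b -> y @ sfilt N --> b.
Proof.
move=> [_ h] B; rewrite nbhsE => -[V [oV Vb] VB].
apply: dz_sub (hd_dz (h V oV Vb)) => n [Nn nB]; split => // Vy; exact/nB/VB.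
Qed.

Lemma cvg_sc {X : topologicalType} N (y : nat -> X) b :
  nonthin N -> y @ sfilt N --> b -> stat_converges N y b.
Proof.
move=> nt h; split => // U oU Ub; apply: dz_hd.
exact: (h U (open_nbhs_nbhs (conj oU Ub))).
Qed.

Lemma sc_sub {X : topologicalType} N N' (y : nat -> X) b :
  stat_converges N y b -> (N' `<=` N)%classic -> nonthin N' -> stat_converges N' y b.
Proof.
move=> [_ h] sN nt; split => // U oU Ub; apply: dz_hd.
apply: dz_sub (hd_dz (h U oU Ub)) => m [Nm nU]; split => //; exact: sN.
Qed.

Lemma prod_cvg n (X : 'I_n -> topologicalType) (F : set_system nat) {FF : Filter F}
  (x : nat -> prod_topology X) (a : prod_topology X) :
  (forall i, (fun m => x m i) @ F --> a i) -> x @ F --> a.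
Proof.
move=> h; apply/cvg_sup => i; apply/cvg_image.
- rewrite eqEsubset; split => // y _; exists (dfwith a i y) => //.
  by rewrite dfwithin.
- move=> B /h hB; exists ((fun f : prod_topology X => f i) @^-1` B) => //.
  apply: image_preimage.
  rewrite eqEsubset; split => // y _; exists (dfwith a i y) => //.
  by rewrite dfwithin.
Qed.

Theorem mainTheorem13 (n : nat) (X : 'I_n -> topologicalType) :
  (forall i : 'I_n, stat_compact (X i)) ->
  stat_compact (prod_topology X).
Proof.
move=> hX M x hM.
have step : forall k, (k <= n)%nat -> exists N : set nat, (N `<=` M)%classic /\ nonthin N /\
    forall i : 'I_n, (i < k)%nat -> exists ai : X i, stat_converges N (fun m => x m i) ai.
  elim=> [_|k IH kn].
    by exists M; split => //; split => // i.
  have [N [sNM [ntN hN]]] := IH (ltnW kn).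
  pose i0 : 'I_n := Ordinal kn.
  have [N' [sN' [ntN' [b hb]]]] := hX i0 N (fun m => x m i0) ntN.
  exists N'; split; first by move=> m /sN' /sNM.
  split => // i; rewrite ltnS leq_eqVlt => /orP [/eqP e|lt].
    have -> : i = i0 by apply: val_inj.
    by exists b.
  have [ai hai] := hN i lt; exists ai; exact: sc_sub hai sN' ntN'.
have [N [sNM [ntN hN]]] := step n (leqnn n).
exists N; split => //; split => //.
pose a : prod_topology X := fun i => projT1 (cid (hN i (ltn_ord i))).
exists a; apply: cvg_sc => //; apply: prod_cvg => i.
apply: sc_cvg; exact: (projT2 (cid (hN i (ltn_ord i)))).
Qed.
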